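(* There is a regular language $L$ such that ${\rm pssr}(L)$ is not regular; for instance $L=0^+10^+$, for which ${\rm pssr}(L)\cap 0^+110^+=\{0^n110^n : n\ge 2\}$.
   Context: For words $x=a_1\cdots a_n$, $y=b_1\cdots b_n$ of the same length, the perfect shuffle is $x\,\text{sh}\,y=a_1b_1a_2b_2\cdots a_nb_n$. $x^R$ denotes the reversal of $x$. For a language $L$, ${\rm pssr}(L)=\{x\,\text{sh}\,x^R : x\in L\}$. *)

(* Defs.v *)
From mathcomp Require Import all_boot.
Set Implicit Arguments. Unset Strict Implicit. Unset Printing Implicit Defensive.

Definition language (A : Type) := seq A -> Prop.

Record dfa (A : finType) := DFA {
  dfa_state : finType;
  dfa_start : dfa_state;
  dfa_final : pred dfa_state;
  dfa_trans : dfa_state -> A -> dfa_state }.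

Definition dfa_accept (A : finType) (M : dfa A) (w : seq A) : bool :=
  @dfa_final A M (foldl (@dfa_trans A M) (@dfa_start A M) w).

Definition regular (A : finType) (L : language A) : Prop :=
  exists M : dfa A, forall w, L w <-> dfa_accept M w.

(* Perfect shuffle of two words (intended for words of equal length). *)
Fixpoint shuffle (T : Type) (x y : seq T) : seq T :=
  match x, y with
  | a :: x', b :: y' => a :: b :: shuffle x' y'
  | _, _ => [::]
  end.

Definition pssr (A : Type) (L : language A) : language A :=
  fun w => exists x, L x /\ w = shuffle x (rev x).

(* Binary alphabet: 0 = false, 1 = true. *)
Definition L0 : language bool :=
  fun w => exists m n, 0 < m /\ 0 < n /\ w = nseq m false ++ true :: nseq n false.

Definition L011 : language bool :=
  fun w => exists m n, 0 < m /\ 0 < n /\ w = nseq m false ++ true :: true :: nseq n false.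

(* Main.v *)
Require Import Defs.
From mathcomp Require Import all_boot.
From Stdlib Require Import Setoid.

Lemma shuffle_cat (T : Type) (a b c d : seq T) : size a = size c ->
  shuffle (a ++ b) (c ++ d) = shuffle a c ++ shuffle b d.
Proof.
elim: a c => [|x a IH] [|y c] //= [] /IH ->. by [].
Qed.

Lemma shuffle_nseq k : shuffle (nseq k false) (nseq k false) = nseq (k + k) false.
Proof. elim: k => [|k IH] //=. by rewrite IH addnS. Qed.

Lemma nseq_snoc (k : nat) (s : seq bool) : nseq k false ++ false :: s = nseq k.+1 false ++ s.
Proof. by elim: k => [|k IH] //=; rewrite IH. Qed.

Lemma ft_snoc k (s : seq bool) (x y : bool) : nseq k false ++ [:: x; y] ++ s = nseq k false ++ x :: y :: s.
Proof. by []. Qed.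

Lemma nseq_snoc' k (s : seq bool) : nseq k false ++ false :: s = false :: nseq k false ++ s.
Proof. by elim: k => [|k IH] //=; rewrite IH. Qed.

Lemma sh_eq a : shuffle (nseq a false ++ true :: nseq a false) (rev (nseq a false ++ true :: nseq a false))
  = nseq (a+a) false ++ true :: true :: nseq (a+a) false.
Proof.
have -> : nseq a false ++ true :: nseq a false = nseq a false ++ [:: true] ++ nseq a false by [].
rewrite !rev_cat rev_nseq /= -catA /=.
rewrite shuffle_cat ?size_nseq // -cat1s shuffle_cat // shuffle_nseq.
by [].
Qed.

Lemma ccA (T:Type) (x:T) (s t u : seq T) : (x :: s ++ t) ++ u = x :: s ++ t ++ u.
Proof. by rewrite cat_cons catA. Qed.

Lemma rev_mid (x y : bool) d : rev ([:: x] ++ nseq d false ++ [:: y]) = [:: y] ++ nseq d false ++ [:: x].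
Proof. by rewrite !rev_cat rev_nseq catA. Qed.
Lemma rev3 (T : Type) (A B : seq T) : rev (A ++ B ++ A) = rev A ++ rev B ++ rev A.
Proof. by rewrite !rev_cat catA. Qed.

Lemma sh_mid (x y : bool) d : shuffle ([:: x] ++ nseq d false ++ [:: y]) ([:: y] ++ nseq d false ++ [:: x])
  = [:: x; y] ++ nseq (d+d) false ++ [:: y; x].
Proof.
rewrite (@shuffle_cat _ [:: x] _ [:: y]) // (@shuffle_cat _ (nseq d false) _ (nseq d false)) ?size_nseq //.
by rewrite shuffle_nseq.
Qed.

Lemma sh_gen (u v : seq bool) a : size u = size v ->
  shuffle (nseq a false ++ u ++ nseq a false) (nseq a false ++ v ++ nseq a false)
  = nseq (a+a) false ++ shuffle u v ++ nseq (a+a) false.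
Proof.
move=> H; rewrite (@shuffle_cat _ (nseq a false) _ (nseq a false)) ?size_nseq //.
by rewrite (@shuffle_cat _ u _ v) // !shuffle_nseq.
Qed.

Lemma sh_lt a d : shuffle (nseq a false ++ true :: nseq (a + d.+1) false)
   (rev (nseq a false ++ true :: nseq (a + d.+1) false))
  = nseq (a+a) false ++ true :: nseq (d+d).+2 false ++ true :: nseq (a+a) false.
Proof.
have -> : nseq a false ++ true :: nseq (a + d.+1) false
   = nseq a false ++ ([:: true] ++ nseq d false ++ [:: false]) ++ nseq a false.
  by rewrite addnC nseqD /= -!catA /= nseq_snoc.
have -> : rev (nseq a false ++ ([:: true] ++ nseq d false ++ [:: false]) ++ nseq a false)
   = nseq a false ++ ([:: false] ++ nseq d false ++ [:: true]) ++ nseq a false.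
  by rewrite rev3 rev_mid rev_nseq.
rewrite sh_gen ?size_cat ?size_nseq // sh_mid /=.
by rewrite -catA ft_snoc nseq_snoc'.
Qed.

Lemma nseq_mid d (Y : seq bool) : ([:: false] ++ nseq d false ++ [:: true]) ++ Y = nseq d.+1 false ++ true :: Y.
Proof. by rewrite -!catA !cat1s. Qed.

Lemma sh_gt b d : shuffle (nseq (b + d.+1) false ++ true :: nseq b false)
   (rev (nseq (b + d.+1) false ++ true :: nseq b false))
  = nseq (b+b).+1 false ++ true :: nseq (d+d) false ++ true :: nseq (b+b).+1 false.
Proof.
have -> : nseq (b + d.+1) false ++ true :: nseq b false
   = nseq b false ++ ([:: false] ++ nseq d false ++ [:: true]) ++ nseq b false.
  by rewrite nseqD -catA nseq_mid.
have -> : rev (nseq b false ++ ([:: false] ++ nseq d false ++ [:: true]) ++ nseq b false)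
   = nseq b false ++ ([:: true] ++ nseq d false ++ [:: false]) ++ nseq b false.
  by rewrite rev3 rev_mid rev_nseq.
rewrite sh_gen ?size_cat ?size_nseq // sh_mid /=.
by rewrite -!catA /= nseq_snoc.
Qed.

Lemma nseq_true_eq p p' (s s' : seq bool) :
  nseq p false ++ true :: s = nseq p' false ++ true :: s' -> p = p' /\ s = s'.
Proof.
elim: p p' => [|p IH] [|p'] //=; first by case.
by case=> /IH [-> ->].
Qed.

Lemma nseq_inj k k' : nseq k false = nseq k' false -> k = k'.
Proof. by move=> /(congr1 size); rewrite !size_nseq. Qed.

Lemma char_pssr w : (pssr L0 w /\ L011 w) <->
   exists n, 2 <= n /\ w = nseq n false ++ true :: true :: nseq n false.
Proof.
split.
- move=> [[x [[a [b [a0 [b0 ->]]]] ->]] [p [q [p0 [q0 E]]]]].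
  case: (ltngtP a b) => Hab.
  + have [d Eb] : exists d, b = a + d.+1 by exists (b - a).-1; rewrite prednK ?subn_gt0 // subnKC // ltnW.
    subst b.
    rewrite sh_lt in E.
    by move: E => /nseq_true_eq [_].
  + have [d Ea] : exists d, a = b + d.+1 by exists (a - b).-1; rewrite prednK ?subn_gt0 // subnKC // ltnW.
    subst a; rewrite sh_gt in E.
    move: E => /nseq_true_eq [Ep E2].
    clear Hab; case: d a0 E2 => [|d] a0 //= _.
    exists (b+b).+1; split; first by case: b b0 {Ep a0} => [|b] //.
    by rewrite sh_gt.
  + subst b. rewrite sh_eq in E.
    exists (a+a); split; first by case: a a0 b0 {E} => [|a] //; rewrite addnS.
    by rewrite sh_eq.
- move=> [n [n2 ->]]; split; last first.
    by exists n, n; split; [exact: leq_trans n2 | split; [exact: leq_trans n2|]].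
  have [m [Hm | Hm]] : exists m, n = m + m \/ n = (m + m).+1.
    elim: (n) => [|k [m [->|->]]]; first by exists 0; left.
    + by exists m; right.
    + by exists m.+1; left; rewrite addnS.
  + exists (nseq m false ++ true :: nseq m false); split; last by rewrite sh_eq Hm.
    have m0 : 0 < m by move: n2; rewrite Hm; case: (m).
    by exists m, m.
  + case: m Hm => [|m] Hm; first by rewrite Hm in n2.
    exists (nseq (m.+1 + 1) false ++ true :: nseq m.+1 false); split; last first.
      by rewrite sh_gt Hm.
    by exists (m.+1+1), m.+1; split; [rewrite addn1|split].
Qed.

Definition f (s : nat) (b : bool) : nat :=
  match s, b with
  | 0, false => 1 | 0, true => 4
  | 1, false => 1 | 1, true => 2
  | 2, false => 3 | 2, true => 4
  | 3, false => 3 | _, _ => 4 end.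

Lemma f_lt5 s b : f s b < 5.
Proof. by case: s => [|[|[|[|s]]]]; case: b. Qed.

Definition tr (s : 'I_5) (b : bool) : 'I_5 := inord (f s b).

Definition M0 : dfa bool := @DFA bool 'I_5 ord0 (fun s => val s == 3) tr.

Lemma run_val (s : 'I_5) w : val (foldl tr s w) = foldl f (val s) w.
Proof.
elim: w s => [|b w IH] s //=.
by rewrite IH; congr foldl; exact: (inordK (f_lt5 s b)).
Qed.

Lemma F4 w : foldl f 4 w = 4.
Proof. by elim: w => [|[] w IH]. Qed.

Lemma F3 w : foldl f 3 w = 3 <-> w = nseq (size w) false.
Proof.
elim: w => [|[] w IH] //=; first by rewrite F4.
by split => [/IH E|[E]]; [rewrite {1}E | exact/IH].
Qed.

Lemma F2 w : foldl f 2 w = 3 <-> exists n, 0 < n /\ w = nseq n false.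
Proof.
case: w => [|[] w] /=.
- by split => // [[[|n] [n0 ]]].
- by rewrite F4; split => // [[[|n] [n0 ]]].
- rewrite F3; split => [E|[[|n] [n0 [E]]]] //.
  + by exists (size w).+1; split => //; apply: (congr1 (cons false)).
  + by rewrite E size_nseq.
Qed.

Lemma F1 w : foldl f 1 w = 3 <-> exists m n, 0 < n /\ w = nseq m false ++ true :: nseq n false.
Proof.
elim: w => [|[] w IH] /=.
- by split => // [[[|m] [n [n0 ]]]].
- rewrite F2; split => [[n [n0 ->]]|[[|m] [n [n0 [E]]]]] //.
  + by exists 0, n.
  + by exists n.
- rewrite IH; split => [[m [n [n0 ->]]]|[[|m] [n [n0 [E]]]]] //.
  + by exists m.+1, n.
  + by exists m, n.
Qed.

Lemma F0 w : foldl f 0 w = 3 <-> L0 w.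
Proof.
case: w => [|[] w] /=.
- by split => // [[[|m] [n [m0 [n0 ]]]]].
- by rewrite F4; split => // [[[|m] [n [m0 [n0 ]]]]].
- rewrite F1; split => [[m [n [n0 ->]]]|[[|m] [n [m0 [n0 [E]]]]]] //.
  + by exists m.+1, n.
  + by exists m, n.
Qed.

Lemma L0_regular : regular L0.
Proof.
exists M0 => w; rewrite /dfa_accept /= -F0.
have := run_val ord0 w; rewrite /= => <-.
by split => [->|/eqP].
Qed.

Lemma pssr_not_regular : ~ regular (pssr L0).
Proof.
move=> [M HM].
pose g (i : 'I_(#|dfa_state M|).+1) := foldl (@dfa_trans _ M) (@dfa_start _ M) (nseq i.+2 false).
have : ~~ injectiveb g.
  apply/negP => /injectiveP /leq_card; rewrite card_ord => H.
  change (is_true (#|dfa_state M| < #|dfa_state M|)) in H; by rewrite ltnn in H.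
move=> /injectivePn [i [j ij Eg]].
have acc : forall k, 2 <= k -> dfa_accept M (nseq k false ++ true :: true :: nseq k false).
  move=> k k2; apply/HM; case: (char_pssr (nseq k false ++ true :: true :: nseq k false)) => _ H.
  by case: H; [exists k|].
have := acc j.+2 isT.
rewrite /dfa_accept foldl_cat -/(g j) -Eg /g -foldl_cat -/(dfa_accept M _).
move=> /HM Hp.
have [n [_ E]] : exists n, 2 <= n /\ nseq i.+2 false ++ true :: true :: nseq j.+2 false
     = nseq n false ++ true :: true :: nseq n false.
  apply/char_pssr; split => //; by exists i.+2, j.+2.
move: E => /nseq_true_eq [E1 E2'].
have E2 : j.+2 = n by apply: nseq_inj; case: E2'.
have eij : i = j by apply: val_inj; apply: succn_inj; apply: succn_inj; rewrite E1 E2.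
by rewrite eij eqxx in ij.
Qed.

Theorem mainTheorem6 :
  (exists L : language bool, regular L /\ ~ regular (pssr L)) /\
  (regular L0 /\ ~ regular (pssr L0) /\
   forall w, (pssr L0 w /\ L011 w) <->
             exists n, 2 <= n /\ w = nseq n false ++ true :: true :: nseq n false).
Proof.
split; first by exists L0; split; [exact: L0_regular | exact: pssr_not_regular].
split; first exact: L0_regular.
split; first exact: pssr_not_regular.
exact: char_pssr.
Qed.
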